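(* Let $(C,\delta)$ be an $N$-codifferential graded coalgebra. Then: 1. $\mathrm{End}(C)$, with composition as product and differential $d(f)=\delta\circ f-(-1)^{\bar f}f\circ\delta$, is a $(2N-1)$-differential graded algebra. 2. $\mathrm{Coder}(C)\subseteq\mathrm{End}(C)$, with the graded commutator $[f,g]=f\circ g-(-1)^{\bar f\bar g}g\circ f$ and the same $d$, is a $(2N-1)$-differential graded Lie algebra.
   Context: All vector spaces are $\mathbb{Z}$-graded over a field $k$ of characteristic zero, and $\bar f$ denotes degree. A graded coalgebra is a graded vector space $C$ with a degree-zero coassociative map $\Delta:C\to C\otimes C$. A coderivation of $C$ is a linear map $\delta:C\to C$ with $\Delta\circ\delta=(1\otimes\delta+\delta\otimes1)\circ\Delta$, using Koszul signs. $\mathrm{Coder}(C)$ denotes the space of coderivations. An $N$-codifferential graded coalgebra is a pair $(C,\delta)$ where $C$ is a graded coalgebra and $\delta$ is a degree-one coderivation with $\delta^N=0$. $\mathrm{End}(C)$ is the graded space of graded linear endomorphisms of $C$. A $K$-differential graded algebra is a graded associative algebra with a degree-one map $d$ satisfying $d(ab)=d(a)b+(-1)^{\bar a}a\,d(b)$ and $d^K=0$. A $K$-differential graded Lie algebra is a graded Lie algebra with a degree-one map $d$ satisfying $d[a,b]=[da,b]+(-1)^{\bar a}[a,db]$ and $d^K=0$. *)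

(* Defs.v *)
From HB Require Import structures.
From mathcomp Require Import all_boot all_order all_algebra.
Set Implicit Arguments. Unset Strict Implicit. Unset Printing Implicit Defensive.
Import Order.TTheory GRing.Theory Num.Theory.
Local Open Scope ring_scope.

(* Graded vector spaces are modelled as a k-module C together with a family of
   projections pi i (i : int) realising a direct-sum decomposition
   C = (+)_i C_i with C_i = image of pi i. *)
Section Defs.
Variables (k : fieldType) (C : lmodType k).

Definition lin (f : C -> C) : Prop :=
  forall (a : k) (x y : C), f (a *: x + y) = a *: f x + f y.

Definition grading (pi : int -> C -> C) : Prop :=
  [/\ forall i, lin (pi i),
      forall i j x, pi i (pi j x) = (if i == j then pi j x else 0) &
      forall x, exists s : seq int,
        [/\ uniq s, x = \sum_(i <- s) pi i x & forall i, i \notin s -> pi i x = 0]].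

Definition homog (pi : int -> C -> C) (n : int) (x : C) : Prop := pi n x = x.

Definition gmap (pi : int -> C -> C) (m : int) (f : C -> C) : Prop :=
  lin f /\ forall i x, homog pi i x -> homog pi (i + m) (f x).

(* Tensors in C (x) C are represented by finite lists of pure tensors;
   two tensors are equal iff all bilinear forms agree on them (valid over a field). *)
Definition bilin (b : C -> C -> k) : Prop :=
  (forall y a x x', b (a *: x + x') y = a * b x y + b x' y) /\
  (forall x a y y', b x (a *: y + y') = a * b x y + b x y').

Definition trilin (t : C -> C -> C -> k) : Prop :=
  [/\ forall y z a x x', t (a *: x + x') y z = a * t x y z + t x' y z,
      forall x z a y y', t x (a *: y + y') z = a * t x y z + t x y' z &
      forall x y a z z', t x y (a *: z + z') = a * t x y z + t x y z'].

Definition tev (b : C -> C -> k) (t : seq (C * C)) : k := \sum_(p <- t) b p.1 p.2.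

(* f (x) g without Koszul sign, applied to a representing list *)
Definition tmap (f g : C -> C) (t : seq (C * C)) : seq (C * C) :=
  [seq (f p.1, g p.2) | p <- t].

Definition graded_coalgebra (pi : int -> C -> C) (Delta : C -> seq (C * C)) : Prop :=
  [/\ grading pi,
      forall b, bilin b -> forall a x y,
        tev b (Delta (a *: x + y)) = a * tev b (Delta x) + tev b (Delta y),
      forall n x, homog pi n x -> forall i j, i + j != n ->
        forall b, bilin b -> tev b (tmap (pi i) (pi j) (Delta x)) = 0 &
      forall t, trilin t -> forall x,
        \sum_(p <- Delta x) \sum_(q <- Delta p.1) t q.1 q.2 p.2 =
        \sum_(p <- Delta x) \sum_(q <- Delta p.2) t p.1 q.1 q.2].

(* f is a coderivation of degree m:
   Delta o f = (1 (x) f + f (x) 1) o Delta, with Koszul sign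
   (1 (x) f)(a (x) b) = (-1)^(m |a|) a (x) f b; checked on each
   bihomogeneous component C_i (x) C_j. *)
Definition coder (pi : int -> C -> C) (Delta : C -> seq (C * C)) (m : int)
    (f : C -> C) : Prop :=
  gmap pi m f /\
  forall b, bilin b -> forall (i j : int) x,
    tev b (tmap (pi i) (pi j) (Delta (f x))) =
      (-1) ^ (m * i) * tev b (tmap (pi i) (pi j \o f) (Delta x))
      + tev b (tmap (pi i \o f) (pi j) (Delta x)).

Definition N_codiff (pi : int -> C -> C) (Delta : C -> seq (C * C))
    (delta : C -> C) (N : nat) : Prop :=
  [/\ graded_coalgebra pi Delta, coder pi Delta 1 delta &
      forall x, iter N delta x = 0].

Definition dEnd (delta : C -> C) (m : int) (f : C -> C) : C -> C :=
  fun x => delta (f x) - (-1) ^ m *: f (delta x).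

Fixpoint dpow (delta : C -> C) (m : int) (n : nat) (f : C -> C) : C -> C :=
  if n is n'.+1 then dEnd delta (m + n'%:Z) (dpow delta m n' f) else f.

Definition gbr (m n : int) (f g : C -> C) : C -> C :=
  fun x => f (g x) - (-1) ^ (m * n) *: g (f x).

End Defs.

(* Main.v *)
Require Import Defs.
From HB Require Import structures.
From mathcomp Require Import all_boot all_order all_algebra.
From mathcomp Require Import ring zify.
From Stdlib Require Import FunctionalExtensionality.
Import Order.TTheory GRing.Theory Num.Theory.
Local Open Scope ring_scope.
Set Implicit Arguments. Unset Strict Implicit.

Section Aux.
Variables (k : fieldType) (C : lmodType k).

Lemma sgnE (z : int) : (-1 : k) ^ z = 1 \/ (-1 : k) ^ z = -1.
Proof.
case: z => n; rewrite /exprz.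
  rewrite -signr_odd; case: (odd n); [right|left]; by rewrite ?expr1 ?expr0.
rewrite -signr_odd; case: (odd n.+1); [right|left];
  by rewrite ?expr1 ?expr0 ?invrN1 ?invr1.
Qed.

Lemma N1neq0 : (-1 : k) != 0. Proof. by rewrite oppr_eq0 oner_eq0. Qed.

Lemma sgnD (a b : int) : (-1 : k) ^ (a + b) = (-1) ^ a * (-1) ^ b.
Proof. exact: expfzDr N1neq0. Qed.

Lemma sgnN (a : int) : (-1 : k) ^ (- a) = (-1) ^ a.
Proof. by rewrite -invr_expz; case: (sgnE a) => ->; rewrite ?invr1 ?invrN1. Qed.

Lemma sgn2 (a : int) : (-1 : k) ^ a * (-1) ^ a = 1.
Proof. by case: (sgnE a) => ->; rewrite ?mulr1 ?mulrNN ?mulr1. Qed.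

Lemma lin0 f : lin f -> f 0 = 0 :> C.
Proof.
move=> hf; have := hf 1 0 0; rewrite !scale1r addr0 => H.
by apply: (addrI (f 0)); rewrite -H addr0.
Qed.
Lemma linD f : lin f -> forall x y : C, f (x + y) = f x + f y.
Proof. by move=> hf x y; have := hf 1 x y; rewrite !scale1r. Qed.
Lemma linZ f : lin f -> forall a (x : C), f (a *: x) = a *: f x.
Proof. by move=> hf a x; rewrite -[a *: x]addr0 hf lin0 // addr0. Qed.
Lemma linN f : lin f -> forall (x : C), f (- x) = - f x.
Proof. by move=> hf x; rewrite -scaleN1r linZ // scaleN1r. Qed.
Lemma linB f : lin f -> forall (x y : C), f (x - y) = f x - f y.
Proof. by move=> hf x y; rewrite linD // linN. Qed.
Lemma lin_sum f (I : Type) (s : seq I) (F : I -> C) : lin f ->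
  f (\sum_(i <- s) F i) = \sum_(i <- s) f (F i).
Proof.
move=> hf; elim: s => [|a s IH]; first by rewrite !big_nil lin0.
by rewrite !big_cons linD // IH.
Qed.
Lemma lin_comp (f g : C -> C) : lin f -> lin g -> lin (f \o g).
Proof. by move=> hf hg a x y /=; rewrite hg hf. Qed.
Lemma lin_id : @lin k C id. Proof. by []. Qed.

End Aux.
Section Grad.
Variables (k : fieldType) (C : lmodType k) (pi : int -> C -> C).

Lemma pi_lin i : grading pi -> lin (pi i).
Proof. by case. Qed.

Lemma pi_idem i x : grading pi -> pi i (pi i x) = pi i x.
Proof. by case=> _ h _; rewrite h eqxx. Qed.

Lemma homog_pi i x : grading pi -> homog pi i (pi i x).
Proof. exact: pi_idem. Qed.

Lemma homog_lc i a u v : grading pi -> homog pi i u -> homog pi i v ->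
  homog pi i (a *: u + v).
Proof. by move=> g hu hv; rewrite /homog (pi_lin i g) hu hv. Qed.

Lemma homogZ i a u : grading pi -> homog pi i u -> homog pi i (a *: u).
Proof. by move=> g hu; rewrite /homog linZ ?hu //; exact: pi_lin. Qed.

Lemma homogD i u v : grading pi -> homog pi i u -> homog pi i v ->
  homog pi i (u + v).
Proof. by move=> g hu hv; rewrite /homog linD ?hu ?hv //; exact: pi_lin. Qed.

Lemma homogB i u v : grading pi -> homog pi i u -> homog pi i v ->
  homog pi i (u - v).
Proof. by move=> g hu hv; rewrite /homog linB ?hu ?hv //; exact: pi_lin. Qed.

Lemma pif (m : int) f j v : grading pi -> gmap pi m f ->
  pi j (f v) = f (pi (j - m) v).
Proof.
move=> g [hf hd]; have g' := g; case: g' => hlin hpp hdec.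
case: (hdec v) => s [us hv hz].
rewrite {1}hv lin_sum // lin_sum //.
have E : forall l, pi j (f (pi l v)) = if l == j - m then f (pi l v) else 0.
  move=> l; have hh := hd l (pi l v) (homog_pi l v g).
  rewrite -{1}hh hpp hh (eq_sym l) subr_eq.
  by case: (j == l + m).
under eq_bigr => l _ do rewrite E.
case hs: (j - m \in s).
  rewrite (bigD1_seq (j - m)) //= eqxx big1_seq ?addr0 //.
  by move=> l /andP [/negbTE -> _].
rewrite big1_seq; last first.
  move=> l /andP [_ hl]; case: eqP => // el; by rewrite -el hl in hs.
by rewrite hz ?hs // lin0.
Qed.

End Grad.
Section Dpow.
Variables (k : fieldType) (C : lmodType k) (delta f : C -> C).

Inductive span (n : nat) : (C -> C) -> Prop :=
| span0 : span n (fun _ => 0)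
| spanT i j : (i + j)%N = n -> span n (fun x => iter i delta (f (iter j delta x)))
| spanL a h1 h2 : span n h1 -> span n h2 -> span n (fun x => a *: h1 x + h2 x).

Lemma spanDl n h : lin delta -> span n h -> span n.+1 (fun x => delta (h x)).
Proof.
move=> hd; elim=> [|i j e|a h1 h2 _ IH1 _ IH2].
- have -> : (fun _ : C => delta 0) = (fun _ => 0).
    by apply: functional_extensionality => x; rewrite lin0.
  exact: span0.
- by apply: (spanT (i:=i.+1) (j:=j)); rewrite addSn e.
- have -> : (fun x => delta (a *: h1 x + h2 x)) =
            (fun x => a *: delta (h1 x) + delta (h2 x)).
    by apply: functional_extensionality => x; rewrite hd.
  exact: spanL.
Qed.

Lemma spanDr n h : span n h -> span n.+1 (fun x => h (delta x)).
Proof.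
elim=> [|i j e|a h1 h2 _ IH1 _ IH2].
- exact: span0.
- have -> : (fun x => iter i delta (f (iter j delta (delta x)))) =
            (fun x => iter i delta (f (iter j.+1 delta x))).
    by apply: functional_extensionality => x; rewrite iterSr.
  by apply: spanT; rewrite addnS e.
- exact: spanL.
Qed.

Lemma dpow_span m n : lin delta -> span n (dpow delta m n f).
Proof.
move=> hd; elim: n => [|n IH] /=.
  exact: (spanT (i:=0) (j:=0)).
have -> : dEnd delta (m + n%:Z) (dpow delta m n f) =
   (fun x => (- (-1) ^ (m + n%:Z)) *: dpow delta m n f (delta x) + delta (dpow delta m n f x)).
  by apply: functional_extensionality => x; rewrite /dEnd scaleNr addrC.
apply: spanL; [exact: spanDr | exact: spanDl].
Qed.

Lemma iter_zero n : lin delta -> iter n delta 0 = 0.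
Proof. by move=> hd; elim: n => //= n ->; rewrite lin0. Qed.

Lemma span_van N h x : lin delta -> lin f -> (forall y, iter N delta y = 0) ->
  span (2 * N).-1 h -> h x = 0.
Proof.
move=> hd hf hN; elim=> [|i j e|a h1 h2 _ IH1 _ IH2].
- by [].
- case: (leqP N i) => hi.
    by rewrite -(subnK hi) iterD hN iter_zero.
  have hj : (N <= j)%N.
    move: e; case: N hN hi => [|N'] hN hi e; first by [].
    by rewrite mulnS /= in e; lia.
  by rewrite -(subnK hj) iterD hN iter_zero // lin0 // iter_zero.
- by rewrite IH1 IH2 scaler0 addr0.
Qed.

End Dpow.
Section Coder.
Variables (k : fieldType) (C : lmodType k) (pi : int -> C -> C)
  (Delta : C -> seq (C * C)).

Definition E (b : C -> C -> k) (y : C) (al be : C -> C) : k :=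
  \sum_(p <- Delta y) b (al p.1) (be p.2).

Lemma tevE (b : C -> C -> k) (al be : C -> C) t : tev b (tmap al be t) = \sum_(p <- t) b (al p.1) (be p.2).
Proof. by rewrite /tev big_map. Qed.

Lemma bilin_comp b (al be : C -> C) : bilin b -> lin al -> lin be ->
  bilin (fun u v => b (al u) (be v)).
Proof.
move=> [h1 h2] ha hb; split=> x a y y' /=; first by rewrite ha h1.
by rewrite hb h2.
Qed.

Lemma E_ext b y al be al' be' : (forall u, al u = al' u) -> (forall v, be v = be' v) ->
  E b y al be = E b y al' be'.
Proof. by move=> h1 h2; apply: eq_bigr => p _; rewrite h1 h2. Qed.

Lemma E_lin b al be a x y : graded_coalgebra pi Delta -> bilin b -> lin al -> lin be ->
  E b (a *: x + y) al be = a * E b x al be + E b y al be.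
Proof.
move=> [_ hD _ _] hb ha hbe.
exact: (hD _ (bilin_comp hb ha hbe)).
Qed.

Lemma E_B b al be c x y : graded_coalgebra pi Delta -> bilin b -> lin al -> lin be ->
  E b (x - c *: y) al be = E b x al be - c * E b y al be.
Proof.
move=> g hb ha hbe; rewrite addrC -scaleNr E_lin //; ring.
Qed.

Lemma E_Br b y al be1 be2 c : bilin b ->
  E b y al (fun v => be1 v - c *: be2 v) = E b y al be1 - c * E b y al be2.
Proof.
move=> [_ h2]; rewrite /E mulr_sumr -sumrN -big_split /=.
apply: eq_bigr => p _.
have -> : be1 p.2 - c *: be2 p.2 = (-c) *: be2 p.2 + be1 p.2 by rewrite scaleNr addrC.
rewrite h2; ring.
Qed.

Lemma E_Bl b y al1 al2 be c : bilin b ->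
  E b y (fun v => al1 v - c *: al2 v) be = E b y al1 be - c * E b y al2 be.
Proof.
move=> [h1 _]; rewrite /E mulr_sumr -sumrN -big_split /=.
apply: eq_bigr => p _.
have -> : al1 p.1 - c *: al2 p.1 = (-c) *: al2 p.1 + al1 p.1 by rewrite scaleNr addrC.
rewrite h1; ring.
Qed.

Lemma coderE (m : int) f b (al be : C -> C) i j x : coder pi Delta m f -> bilin b ->
  lin al -> lin be -> grading pi ->
  E b (f x) (fun u => al (pi i u)) (fun v => be (pi j v)) =
  (-1) ^ (m * i) * E b x (fun u => al (pi i u)) (fun v => be (pi j (f v)))
  + E b x (fun u => al (pi i (f u))) (fun v => be (pi j v)).
Proof.
move=> [_ hc] hb ha hbe g.
have := hc _ (bilin_comp hb ha hbe) i j x; rewrite !tevE.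
by [].
Qed.

End Coder.
Section Comp.
Variables (k : fieldType) (C : lmodType k) (pi : int -> C -> C)
  (Delta : C -> seq (C * C)).

Lemma E_comp (m n : int) (f g : C -> C) b i j x : grading pi ->
  coder pi Delta m f -> coder pi Delta n g -> bilin b ->
  E Delta b (f (g x)) (pi i) (pi j) =
  (-1) ^ (m * i) * ((-1) ^ (n * i) * E Delta b x (pi i) (fun v => f (g (pi (j - m - n) v)))
     + E Delta b x (fun u => g (pi (i - n) u)) (fun v => f (pi (j - m) v)))
  + ((-1) ^ (n * (i - m)) * E Delta b x (fun u => f (pi (i - m) u)) (fun v => g (pi (j - n) v))
     + E Delta b x (fun u => f (g (pi (i - m - n) u))) (pi j)).
Proof.
move=> gr hf hg hb.
have [gf _] := hf; have [gg _] := hg; have [lf _] := gf; have [lg _] := gg.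
rewrite (coderE (al:=id) (be:=id) i j (g x) hf hb (@lin_id _ _) (@lin_id _ _) gr) /=.
rewrite (E_ext Delta b (g x) (al' := pi i) (be' := fun v => f (pi (j - m) v))); last 2 first.
1,2: by move=> ?; rewrite ?(pif _ _ gr gf).
rewrite (E_ext Delta b (g x) (al := fun u => pi i (f u)) (al' := fun u => f (pi (i - m) u)) (be' := pi j)); last 2 first.
1,2: by move=> ?; rewrite ?(pif _ _ gr gf).
rewrite (coderE (al:=id) (be:=f) i (j - m) x hg hb (@lin_id _ _) lf gr) /=.
rewrite (coderE (al:=f) (be:=id) (i - m) j x hg hb lf (@lin_id _ _) gr) /=.
by congr (_ * (_ * _ + _) + (_ * _ + _)); apply: E_ext => ?; rewrite ?(pif _ _ gr gg).
Qed.
End Comp.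
Section LC.
Variables (k : fieldType) (C : lmodType k).

Definition lc (v : nat -> C) (c : nat -> k) : C := \sum_(i < 6) c i *: v i.

Lemma lcE v c : lc v c = c 0%N *: v 0%N + c 1%N *: v 1%N + c 2%N *: v 2%N
  + c 3%N *: v 3%N + c 4%N *: v 4%N + c 5%N *: v 5%N.
Proof. by rewrite /lc !big_ord_recr big_ord0 /= add0r. Qed.

Lemma lcD v c d : lc v c + lc v d = lc v (fun i => c i + d i).
Proof. by rewrite /lc -big_split /=; apply: eq_bigr => i _; rewrite scalerDl. Qed.

Lemma lcZ v a c : a *: lc v c = lc v (fun i => a * c i).
Proof. by rewrite /lc scaler_sumr; apply: eq_bigr => i _; rewrite scalerA. Qed.

Lemma lcN v c : - lc v c = lc v (fun i => - c i).
Proof. by rewrite /lc -sumrN; apply: eq_bigr => i _; rewrite scaleNr. Qed.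

Lemma lc0 v : 0 = lc v (fun _ => 0).
Proof. by rewrite /lc big1 // => i _; rewrite scale0r. Qed.

Lemma lcv v i : (i < 6)%N -> v i = lc v (fun j => if j == i then 1 else 0).
Proof.
move=> hi; rewrite lcE.
by case: i hi => [|[|[|[|[|[|i]]]]]] hi //=; rewrite ?scale0r ?scale1r ?add0r ?addr0.
Qed.

Lemma lc_eq v c d : (forall i, (i < 6)%N -> c i = d i) -> lc v c = lc v d.
Proof. by move=> h; apply: eq_bigr => i _; rewrite h. Qed.

End LC.

Ltac lc_fold v :=
  rewrite ?(@lcv _ _ v 0%N isT) ?(@lcv _ _ v 1%N isT) ?(@lcv _ _ v 2%N isT)
          ?(@lcv _ _ v 3%N isT) ?(@lcv _ _ v 4%N isT) ?(@lcv _ _ v 5%N isT) //;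
  rewrite ?(lcZ, lcN, lcD) ?(lc0 v);
  apply: lc_eq; case => [|[|[|[|[|[|?]]]]]] ? /=; [..|by []].

Section More.
Variables (k : fieldType) (C : lmodType k) (pi : int -> C -> C)
  (Delta : C -> seq (C * C)).

Lemma bilin0r (b : C -> C -> k) x : bilin b -> b x 0 = 0.
Proof.
move=> [_ h2]; have := h2 x 1 0 0; rewrite !scale1r addr0 mul1r => H.
by apply: (addrI (b x 0)); rewrite -H addr0.
Qed.

Lemma bilin0l (b : C -> C -> k) y : bilin b -> b 0 y = 0.
Proof.
move=> [h1 _]; have := h1 y 1 0 0; rewrite !scale1r addr0 mul1r => H.
by apply: (addrI (b 0 y)); rewrite -H addr0.
Qed.

Lemma E_lcl b y al1 al2 be c : bilin b ->
  E Delta b y (fun v => c *: al1 v + al2 v) be = c * E Delta b y al1 be + E Delta b y al2 be.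
Proof.
move=> [h1 _]; rewrite /E mulr_sumr -big_split /=.
by apply: eq_bigr => p _; rewrite h1.
Qed.

Lemma E0 b al be : graded_coalgebra pi Delta -> bilin b -> lin al -> lin be ->
  E Delta b 0 al be = 0.
Proof.
move=> g hb ha hbe; have := E_lin 1 0 0 g hb ha hbe.
rewrite scale1r addr0 mul1r => H.
by apply: (addrI (E Delta b 0 al be)); rewrite -H addr0.
Qed.

Lemma E_lcr b y al be1 be2 c : bilin b ->
  E Delta b y al (fun v => c *: be1 v + be2 v) = c * E Delta b y al be1 + E Delta b y al be2.
Proof.
move=> [_ h2]; rewrite /E mulr_sumr -big_split /=.
by apply: eq_bigr => p _; rewrite h2.
Qed.

Lemma coder_E (m : int) f : coder pi Delta m f <->
  gmap pi m f /\ forall b, bilin b -> forall (i j : int) x,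
    E Delta b (f x) (pi i) (pi j) =
      (-1) ^ (m * i) * E Delta b x (pi i) (fun v => pi j (f v))
      + E Delta b x (fun u => pi i (f u)) (pi j).
Proof.
split=> [[h1 h2]|[h1 h2]]; split=> // b hb i j x.
  by have := h2 b hb i j x; rewrite !tevE.
by have := h2 b hb i j x; rewrite !tevE.
Qed.

Lemma gmap_gbr (m n : int) f g : grading pi -> gmap pi m f -> gmap pi n g ->
  gmap pi (m + n) (gbr m n f g).
Proof.
move=> gr [lf df] [lg dg]; split.
  move=> a x y; rewrite /gbr lg lf lf lg.
  pose v := nth 0 [:: f (g x); f (g y); g (f x); g (f y); 0; 0].
  rewrite (_ : f (g x) = v 0%N) // (_ : f (g y) = v 1%N) //
          (_ : g (f x) = v 2%N) // (_ : g (f y) = v 3%N) //.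
  by lc_fold v; ring.
move=> i x h; rewrite /gbr; apply: homogB => //.
  by rewrite (addrC m) addrA; apply: df; apply: dg.
by apply: homogZ => //; rewrite addrA; apply: dg; apply: df.
Qed.

End More.
Section Br.
Variables (k : fieldType) (C : lmodType k) (pi : int -> C -> C)
  (Delta : C -> seq (C * C)).

Lemma coder_gbr (m n : int) f g : graded_coalgebra pi Delta ->
  coder pi Delta m f -> coder pi Delta n g -> coder pi Delta (m + n) (gbr m n f g).
Proof.
move=> gc hf hg; have gr : grading pi by case: gc.
have [gf _] := hf; have [gg _] := hg; have ggb := gmap_gbr gr gf gg.
apply/coder_E; split => // b hb i j x.
rewrite (E_ext Delta b x (al := pi i) (be := fun v => pi j (gbr m n f g v))
  (al' := pi i) (be' := fun v => f (g (pi (j - (m + n)) v))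
     - (-1) ^ (m * n) *: g (f (pi (j - (m + n)) v)))); last 2 first.
- by [].
- by move=> v; rewrite (pif _ _ gr ggb).
rewrite (E_ext Delta b x (al := fun u => pi i (gbr m n f g u)) (be := pi j)
  (al' := fun u => f (g (pi (i - (m + n)) u))
     - (-1) ^ (m * n) *: g (f (pi (i - (m + n)) u))) (be' := pi j)); last 2 first.
- by move=> v; rewrite (pif _ _ gr ggb).
- by [].
rewrite E_Br // E_Bl //.
rewrite [gbr m n f g x]/gbr (E_B (pi:=pi)) //; try exact: pi_lin.
rewrite (E_comp _ _ _ gr hf hg hb) (E_comp _ _ _ gr hg hf hb).
have e1 : j - m - n = j - (m + n) by rewrite opprD addrA.
have e2 : j - n - m = j - (m + n) by rewrite opprD addrA addrAC.
have e3 : i - m - n = i - (m + n) by rewrite opprD addrA.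
have e4 : i - n - m = i - (m + n) by rewrite opprD addrA addrAC.
rewrite e1 e2 e3 e4.

rewrite (mulrBr n) (mulrBr m) (mulrDl m n i) !sgnD !sgnN (mulrC n m).
by case: (sgnE k (m * n)) => ->; ring.
Qed.

End Br.
Unset Implicit Arguments.
Theorem mainTheorem4 (k : fieldType) (C : lmodType k) (pi : int -> C -> C)
    (Delta : C -> seq (C * C)) (delta : C -> C) (N : nat) :
  [pchar k] =i pred0 ->
  N_codiff pi Delta delta N ->
  (* 1. End(C) is a (2N-1)-differential graded algebra *)
  (gmap pi 0 id /\
      (forall (m n : int) f g, gmap pi m f -> gmap pi n g -> gmap pi (m + n) (f \o g)) /\
      (forall (m : int) f, gmap pi m f -> gmap pi (m + 1) (dEnd delta m f)) /\
      (forall (m : int) f g (a : k), gmap pi m f -> gmap pi m g ->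
         dEnd delta m (fun x => a *: f x + g x)
         =1 (fun x => a *: dEnd delta m f x + dEnd delta m g x)) /\
      (forall (m n : int) f g, gmap pi m f -> gmap pi n g ->
         dEnd delta (m + n) (f \o g)
         =1 (fun x => dEnd delta m f (g x) + (-1) ^ m *: f (dEnd delta n g x))) /\
      (forall (m : int) f, gmap pi m f -> dpow delta m (2 * N).-1 f =1 (fun _ => 0)))
  /\
  (* 2. Coder(C) with the graded commutator is a (2N-1)-differential graded Lie algebra *)
  ((forall (m : int), coder pi Delta m (fun _ => 0)) /\
      (forall (m : int) f g (a : k), coder pi Delta m f -> coder pi Delta m g ->
         coder pi Delta m (fun x => a *: f x + g x)) /\
      (forall (m n : int) f g, coder pi Delta m f -> coder pi Delta n g ->
         coder pi Delta (m + n) (gbr m n f g)) /\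
      (forall (m n : int) f g, coder pi Delta m f -> coder pi Delta n g ->
         gbr m n f g =1 (fun x => - ((-1) ^ (m * n) *: gbr n m g f x))) /\
      (forall (m n p : int) f g h, coder pi Delta m f -> coder pi Delta n g ->
         coder pi Delta p h ->
         (fun x => (-1) ^ (m * p) *: gbr m (n + p) f (gbr n p g h) x
                 + (-1) ^ (n * m) *: gbr n (p + m) g (gbr p m h f) x
                 + (-1) ^ (p * n) *: gbr p (m + n) h (gbr m n f g) x) =1 (fun _ => 0)) /\
      (forall (m : int) f, coder pi Delta m f -> coder pi Delta (m + 1) (dEnd delta m f)) /\
      (forall (m n : int) f g, coder pi Delta m f -> coder pi Delta n g ->
         dEnd delta (m + n) (gbr m n f g)
         =1 (fun x => gbr (m + 1) n (dEnd delta m f) g x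
                      + (-1) ^ m *: gbr m (n + 1) f (dEnd delta n g) x)) /\
      (forall (m : int) f, coder pi Delta m f -> dpow delta m (2 * N).-1 f =1 (fun _ => 0))).
Proof.
move=> _ [gc hdel hN]; have gr : grading pi by case: gc.
have [gd _] := hdel; have [ld dd] := gd.
have van : forall (m : int) f, gmap pi m f -> dpow delta m (2 * N).-1 f =1 (fun _ => 0).
  by move=> m f [lf _] x /=; apply: (span_van x ld lf hN); apply: dpow_span.
split.
split; [split; [exact: lin_id | by move=> i x h; rewrite addr0] |].
split.
  move=> m n f g [lf df] [lg dg]; split; first exact: lin_comp.
  by move=> i x h; rewrite (addrC m n) addrA; apply: df; apply: dg.
split.
  move=> m f [lf df]; split.
    move=> a x y; rewrite /dEnd lf ld ld lf.
    pose v := nth 0 [:: delta (f x); delta (f y); f (delta x); f (delta y); 0; 0].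
    rewrite (_ : delta (f x) = v 0%N) // (_ : delta (f y) = v 1%N) //
            (_ : f (delta x) = v 2%N) // (_ : f (delta y) = v 3%N) //.
    by lc_fold v; ring.
  move=> i x h; rewrite /dEnd; apply: homogB => //.
    by rewrite addrA; apply: dd; apply: df.
  by apply: homogZ => //; rewrite (addrC m) addrA; apply: df; apply: dd.
split.
  move=> m f g a [lf _] [lg _] x; rewrite /dEnd ld.
  pose v := nth 0 [:: delta (f x); delta (g x); f (delta x); g (delta x); 0; 0].
  rewrite (_ : delta (f x) = v 0%N) // (_ : delta (g x) = v 1%N) //
          (_ : f (delta x) = v 2%N) // (_ : g (delta x) = v 3%N) //.
  by lc_fold v; ring.
split; last exact: van.
move=> m n f g [lf _] [lg _] x; rewrite /dEnd /= sgnD (linB lf) (linZ lf).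
pose v := nth 0 [:: delta (f (g x)); f (delta (g x)); f (g (delta x)); 0; 0; 0].
rewrite (_ : delta (f (g x)) = v 0%N) // (_ : f (delta (g x)) = v 1%N) //
        (_ : f (g (delta x)) = v 2%N) //.
by lc_fold v; ring.
have lpi : forall i, lin (pi i) by move=> i; exact: pi_lin.
split.
  move=> m; apply/coder_E; split.
    split; first by move=> a x y; rewrite scaler0 addr0.
    by move=> i x _; rewrite /homog lin0.
  move=> b hb i j x; rewrite (E0 (pi := pi)) // !(lin0 (lpi _)) /E.
  by rewrite !big1 ?mulr0 ?addr0 // => p _; rewrite ?bilin0r ?bilin0l.
split.
  move=> m f g a /coder_E [[lf df] hf] /coder_E [[lg dg] hg]; apply/coder_E; split.
    split.
      move=> c x y; rewrite lf lg.
      pose v := nth 0 [:: f x; f y; g x; g y; 0; 0].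
      rewrite (_ : f x = v 0%N) // (_ : f y = v 1%N) //
              (_ : g x = v 2%N) // (_ : g y = v 3%N) //.
      by lc_fold v; ring.
    by move=> i x h; apply: homog_lc => //; [apply: df | apply: dg].
  move=> b hb i j x; rewrite (E_lin (pi := pi)) // hf // hg //.
  rewrite (E_ext Delta b x (al := pi i) (be := fun v => pi j (a *: f v + g v))
    (al' := pi i) (be' := fun v => a *: pi j (f v) + pi j (g v))); last 2 first.
  - by [].
  - by move=> v; rewrite lpi.
  rewrite (E_ext Delta b x (al := fun u => pi i (a *: f u + g u)) (be := pi j)
    (al' := fun u => a *: pi i (f u) + pi i (g u)) (be' := pi j)); last 2 first.
  - by move=> v; rewrite lpi.
  - by [].
  rewrite E_lcr // E_lcl //; ring.
split; first by move=> m n f g hf hg; exact: coder_gbr.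
split.
  move=> m n f g _ _ x; rewrite /gbr (mulrC n m).
  pose v := nth 0 [:: f (g x); g (f x); 0; 0; 0; 0].
  rewrite (_ : f (g x) = v 0%N) // (_ : g (f x) = v 1%N) //.
  by case: (sgnE k (m * n)) => ->; lc_fold v; ring.
split.
  move=> m n p f g h [[lf _] _] [[lg _] _] [[lh _] _] x /=; rewrite /gbr.
  rewrite !(linB lf) !(linB lg) !(linB lh) !(linZ lf) !(linZ lg) !(linZ lh).
  rewrite (mulrDr m n p) (mulrDr n p m) (mulrDr p m n) !sgnD
          (mulrC n m) (mulrC p m) (mulrC p n).
  pose v := nth 0 [:: f (g (h x)); f (h (g x)); g (h (f x)); h (g (f x));
                      g (f (h x)); h (f (g x))].
  rewrite (_ : f (g (h x)) = v 0%N) // (_ : f (h (g x)) = v 1%N) //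
          (_ : g (h (f x)) = v 2%N) // (_ : h (g (f x)) = v 3%N) //
          (_ : g (f (h x)) = v 4%N) // (_ : h (f (g x)) = v 5%N) //.
  by case: (sgnE k (m * n)) => ->; case: (sgnE k (n * p)) => ->;
     case: (sgnE k (m * p)) => ->; lc_fold v; ring.
split.
  move=> m f hf.
  have -> : dEnd delta m f = gbr 1 m delta f.
    by apply: functional_extensionality => x; rewrite /dEnd /gbr mul1r.
  by rewrite addrC; exact: coder_gbr.
split; last by move=> m f [gf _]; exact: van.
move=> m n f g [[lf _] _] [[lg _] _] x; rewrite /gbr /dEnd.
rewrite !(linB ld) !(linZ ld) !(linB lf) !(linZ lf) !(linB lg) !(linZ lg).
rewrite (mulrDl m 1 n) (mulrDr m n 1) mul1r mulr1 !sgnD.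
pose v := nth 0 [:: delta (f (g x)); delta (g (f x)); f (g (delta x));
                    g (f (delta x)); f (delta (g x)); g (delta (f x))].
rewrite (_ : delta (f (g x)) = v 0%N) // (_ : delta (g (f x)) = v 1%N) //
        (_ : f (g (delta x)) = v 2%N) // (_ : g (f (delta x)) = v 3%N) //
        (_ : f (delta (g x)) = v 4%N) // (_ : g (delta (f x)) = v 5%N) //.
by case: (sgnE k (m * n)) => ->; case: (sgnE k m) => ->;
   case: (sgnE k n) => ->; lc_fold v; ring.
Qed.
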